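(* For every $l$ and every arm $i$, the map $\Theta_l\ni\overline{\boldsymbol{\eta}}\mapsto\inf_{\overline{\boldsymbol{\eta}}'\in\Theta_{-l}}D(\boldsymbol{\eta}_i\|\boldsymbol{\eta}_i')$ is continuous.
   Context: $K$ arms; arm $i$ has observation density $f_i(x\mid\boldsymbol{\eta}_i)=h(x)\exp(\boldsymbol{\eta}_i^T\mathbf{T}(x)-\mathcal{A}_i(\boldsymbol{\eta}_i))$ with $\boldsymbol{\eta}_i$ in an open convex $\Psi_i\subset\mathbb{R}^d$, minimal representation, $\mathcal{A}_i$ strictly convex and $C^2$ with positive definite Hessian. $\boldsymbol{\kappa}_i=\nabla\mathcal{A}_i$; $D(\boldsymbol{\eta}_i\|\boldsymbol{\eta}_i')=(\boldsymbol{\eta}_i-\boldsymbol{\eta}_i')^T\boldsymbol{\kappa}_i(\boldsymbol{\eta}_i)-\mathcal{A}_i(\boldsymbol{\eta}_i)+\mathcal{A}_i(\boldsymbol{\eta}_i')$. $\overline{\boldsymbol{\eta}}=(\boldsymbol{\eta}_1,\dots,\boldsymbol{\eta}_K)$. Hypotheses: pairwise disjoint nonempty $\Theta_1,\dots,\Theta_M\subset\prod_i\Psi_i$ ($M\ge2$), each open relative to its affine hull; $\Theta_{-l}=\bigcup_{m\ne l}\Theta_m$. *)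

(* Defs.v *)
From HB Require Import structures.
From mathcomp Require Import all_boot all_order all_algebra.
From mathcomp Require Import all_classical all_reals all_analysis.
Set Implicit Arguments. Unset Strict Implicit. Unset Printing Implicit Defensive.
Import Order.TTheory GRing.Theory Num.Theory.
Import numFieldNormedType.Exports.
Local Open Scope classical_set_scope.
Local Open Scope ring_scope.

Section ExpFamDefs.
Variables (R : realType) (d : nat).

Definition dotv (u v : 'rV[R]_d) : R := \sum_(j < d) u 0 j * v 0 j.

Definition partial (j : 'I_d) (f : 'rV[R]_d -> R) (x : 'rV[R]_d) : R :=
  derive f x (delta_mx 0 j).

Definition grad (f : 'rV[R]_d -> R) (x : 'rV[R]_d) : 'rV[R]_d :=
  \row_j partial j f x.

Definition hessian (f : 'rV[R]_d -> R) (x : 'rV[R]_d) : 'M[R]_d :=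
  \matrix_(j, k) partial k (partial j f) x.

Definition convex_setv (S : set 'rV[R]_d) : Prop :=
  forall x y t, S x -> S y -> 0 <= t <= 1 -> S (t *: x + (1 - t) *: y).

Definition strictly_convex_on (S : set 'rV[R]_d) (f : 'rV[R]_d -> R) : Prop :=
  forall x y t, S x -> S y -> x != y -> 0 < t < 1 ->
    f (t *: x + (1 - t) *: y) < t * f x + (1 - t) * f y.

Definition C2_on (S : set 'rV[R]_d) (f : 'rV[R]_d -> R) : Prop :=
  [/\ forall x, S x -> differentiable f x,
      forall j x, S x -> differentiable (partial j f) x &
      forall j k x, S x -> {for x, continuous (partial k (partial j f))}].

Definition posdef_hessian_on (S : set 'rV[R]_d) (f : 'rV[R]_d -> R) : Prop :=
  forall x (v : 'rV[R]_d), S x -> v != 0 -> 0 < (v *m hessian f x *m v^T) 0 0.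

Definition bregD (A : 'rV[R]_d -> R) (eta eta' : 'rV[R]_d) : R :=
  dotv (eta - eta') (grad A eta) - A eta + A eta'.

End ExpFamDefs.

Section AffDefs.
Variables (R : realType) (m n : nat).

Definition aff_hull (S : set 'M[R]_(m, n)) : set 'M[R]_(m, n) :=
  [set y | exists (p : nat) (x : 'I_p -> 'M[R]_(m, n)) (lam : 'I_p -> R),
     [/\ forall k, S (x k), \sum_(k < p) lam k = 1 &
         y = \sum_(k < p) lam k *: x k]].

Definition rel_open_aff (S : set 'M[R]_(m, n)) : Prop :=
  exists U : set 'M[R]_(m, n), open U /\ S = U `&` aff_hull S.

End AffDefs.

(* Main.v *)
Require Import Defs.
From HB Require Import structures.
From mathcomp Require Import all_boot all_order all_algebra.
From mathcomp Require Import all_classical all_reals all_analysis.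
From mathcomp Require Import ring lra.
Import Order.TTheory GRing.Theory Num.Theory.
Import numFieldNormedType.Exports.
Local Open Scope classical_set_scope.
Local Open Scope ring_scope.

Section H.
Variables (R : realType) (d : nat).
Implicit Types (u v w x y : 'rV[R]_d).

Lemma coord_le u j : `|u 0 j| <= `|u|.
Proof.
change (`|u 0 j| <= mx_norm u); rewrite mx_normrE; apply/bigmax_geP; right => /=.
by exists (0, j).
Qed.

Lemma dotv_le u v : `|dotv u v| <= d%:R * `|u| * `|v|.
Proof.
rewrite /dotv; apply: le_trans (ler_norm_sum _ _ _) _.
apply: le_trans (_ : \sum_(j < d) (`|u| * `|v|) <= _).
  apply: ler_sum => j _; rewrite normrM ler_pM //; exact: coord_le.
by rewrite sumr_const card_ord -mulrA mulr_natl.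
Qed.

Lemma dotvDl u v w : dotv (u + v) w = dotv u w + dotv v w.
Proof. by rewrite /dotv -big_split; apply: eq_bigr => j _; rewrite mxE mulrDl. Qed.
Lemma dotvNl u w : dotv (- u) w = - dotv u w.
Proof. by rewrite /dotv -sumrN; apply: eq_bigr => j _; rewrite mxE mulNr. Qed.
Lemma dotvBl u v w : dotv (u - v) w = dotv u w - dotv v w.
Proof. by rewrite dotvDl dotvNl. Qed.
Lemma dotvZl a u w : dotv (a *: u) w = a * dotv u w.
Proof. by rewrite /dotv mulr_sumr; apply: eq_bigr => j _; rewrite mxE mulrA. Qed.
Lemma dotvBr u v w : dotv u (v - w) = dotv u v - dotv u w.
Proof.
by rewrite /dotv -sumrB; apply: eq_bigr => j _; rewrite !mxE mulrBr.
Qed.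

Lemma dotv_grad (f : 'rV[R]_d -> R) x v : differentiable f x ->
  dotv v (grad f x) = 'd f x v.
Proof.
move=> df; rewrite /dotv /grad {2}(row_sum_delta v) linear_sum.
apply: eq_bigr => j _; rewrite mxE /partial deriveE // linearZ /=.
by [].
Qed.
End H.

Section H.
Variables (R : realType) (d : nat).
Implicit Types (u v w x y : 'rV[R]_d).

Lemma conv_weak (P : set 'rV[R]_d) f : strictly_convex_on P f ->
  forall x y t, P x -> P y -> 0 <= t <= 1 ->
  f (t *: x + (1 - t) *: y) <= t * f x + (1 - t) * f y.
Proof.
move=> sc x y t Px Py /andP[t0 t1].
have [->|xy] := eqVneq x y.
  have e : t + (1 - t) = 1 by ring.
  by rewrite -scalerDl -mulrDl e scale1r mul1r.
have [->|t0'] := eqVneq t 0.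
  by rewrite scale0r add0r subr0 scale1r mul0r add0r mul1r.
have [->|t1'] := eqVneq t 1.
  by rewrite subrr scale0r addr0 scale1r mul0r addr0 mul1r.
apply: ltW; apply: sc => //; apply/andP; split; rewrite lt_neqAle ?t0 ?t1 andbT.
  by rewrite eq_sym.
by [].
Qed.

Lemma grad_ineq (f : 'rV[R]_d -> R) x y :
  (forall t, 0 <= t <= 1 -> f (t *: y + (1 - t) *: x) <= t * f y + (1 - t) * f x) ->
  differentiable f x -> 'd f x (y - x) <= f y - f x.
Proof.
move=> cv df.
rewrite -deriveE //.
have dv := @diff_derivable _ _ _ _ _ (y - x) df.
have H : (fun h : R => h^-1 *: ((f \o shift x) (h *: (y - x)) - f x)) @ 0^'+
   --> 'D_(y - x) f x.
  move=> A /dv /nbhs_ballP [_ /posnumP[e] xe_A].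
  by exists e%:num => //= u xe_u; rewrite lt_def => /andP [u0 _]; apply: xe_A.

apply: (cvgr_to_le H).
near=> h.
have h0 : 0 < h by near: h; exact: nbhs_right_gt.
have h1 : h < 1 by near: h; exact: nbhs_right_lt.
rewrite /= /shift.
have -> : h *: (y - x) + x = h *: y + (1 - h) *: x.
  by rewrite scalerBr scalerBl scale1r addrA addrAC.
have := cv h; rewrite (ltW h0) (ltW h1) => /(_ isT) hc.
rewrite ler_pdivrMl //.
  nra.
Unshelve. all: by end_near.
Qed.
End H.

Section H.
Variables (R : realType) (d : nat).
Implicit Types (u v w x y : 'rV[R]_d).
Variables (P : set 'rV[R]_d) (f : 'rV[R]_d -> R).
Hypotheses (cP : convex_setv P) (sc : strictly_convex_on P f)
  (df : forall x, P x -> differentiable f x).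

Lemma Dform x y : differentiable f x ->
  bregD f x y = f y - f x - 'd f x (y - x).
Proof.
move=> dx; rewrite /bregD dotv_grad // -[x - y]opprB linearN /=; ring.
Qed.

Lemma gradP x y : P x -> P y -> 'd f x (y - x) <= f y - f x.
Proof.
move=> Px Py; apply: grad_ineq; last exact: df.
move=> t t01; exact: (@conv_weak R d P f sc y x t Py Px t01).
Qed.

Lemma D_ge0 x y : P x -> P y -> 0 <= bregD f x y.
Proof. by move=> Px Py; rewrite (Dform _ _ (df _ Px)); have := gradP _ _ Px Py; lra. Qed.

Lemma gradP_strict x y : P x -> P y -> x != y -> 'd f x (y - x) < f y - f x.
Proof.
move=> Px Py xy.
pose m := (1/2 : R) *: y + (1 - 1/2) *: x.
have Pm : P m by apply: cP => //; apply/andP; split; lra.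
have h1 := gradP _ _ Px Pm.
have h2 : f m < 1/2 * f y + (1 - 1/2) * f x.
  by apply: sc => //; [rewrite eq_sym | apply/andP; split; lra].
have e : m - x = (1/2 : R) *: (y - x).
  by rewrite /m scalerBr scalerBl scale1r addrA addrAC addrK.
rewrite e linearZ /= in h1.
have h1' : 1/2 * 'd f x (y - x) <= f m - f x by exact: h1.
lra.
Qed.

Lemma D_gt0 x y : P x -> P y -> x != y -> 0 < bregD f x y.
Proof. by move=> Px Py xy; rewrite (Dform _ _ (df _ Px)); have := gradP_strict _ _ Px Py xy; lra. Qed.

Lemma growth x0 r c : P x0 -> 0 < r -> 0 < c ->
  (forall w, `|w - x0| = r -> c <= bregD f x0 w) ->
  forall y, P y -> c / r * `|y - x0| - c <= bregD f x0 y.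
Proof.
move=> Px0 r0 c0 cb y Py.
have [yr|ry] := leP `|y - x0| r.
  apply: le_trans (D_ge0 _ _ Px0 Py).
  by rewrite subr_le0 mulrAC ler_pdivrMr // ler_pM2l.
set n := `|y - x0| in ry *.
have n0 : 0 < n by lra.
pose s := r / n.
have s0 : 0 < s by rewrite divr_gt0.
have s1 : s < 1 by rewrite ltr_pdivrMr // mul1r.
pose w := s *: y + (1 - s) *: x0.
have wx : w - x0 = s *: (y - x0).
  by rewrite /w scalerBr scalerBl scale1r addrA addrAC addrK.
have nw : `|w - x0| = r.
  by rewrite wx normrZ gtr0_norm // /s divfK // gt_eqF.
have cw := cb _ nw.
have Dw : bregD f x0 w <= s * bregD f x0 y.
  rewrite !(Dform _ _ (df _ Px0)) wx linearZ /=.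
  have := @conv_weak R d P f sc y x0 s Py Px0; rewrite (ltW s0) (ltW s1) => /(_ isT).
  rewrite -/w.
  change (s *: 'd f x0 (y - x0)) with (s * 'd f x0 (y - x0)); nra.
have sn : s * n = r by rewrite /s divfK // gt_eqF.
have : c * n <= r * bregD f x0 y.
  rewrite -sn; nra.
move=> h.
have : c * n / r <= bregD f x0 y by rewrite ler_pdivrMr // mulrC; lra.
rewrite mulrAC; lra.
Qed.
End H.

Section H.
Variables (R : realType) (d : nat).
Implicit Types (u v w x y : 'rV[R]_d).
Variables (P : set 'rV[R]_d) (f : 'rV[R]_d -> R).
Hypotheses (cP : convex_setv P) (sc : strictly_convex_on P f)
  (df : forall x, P x -> differentiable f x).

Lemma cont_D x0 (w : 'rV[R]_d) : P x0 -> P w -> {for w, continuous (bregD f x0)}.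
Proof.
move=> Px0 Pw.
have -> : bregD f x0 = fun w => 'd f x0 (x0 - w) - f x0 + f w.
  by apply/funext => z; rewrite /bregD dotv_grad //; exact: df.
have hd : continuous ('d f x0) := diff_continuous (df _ Px0).
have h0 : {for w, continuous (fun z : 'rV[R]_d => x0 - z)}.
  by have := (cvgB (cvg_cst _) cvg_id); exact.
have h1 := continuous_comp h0 (hd (x0 - w)).
have h2 := differentiable_continuous (df _ Pw).
exact: cvgD (cvgB h1 (cvg_cst _)) h2.
Qed.

Lemma sphere_bound x0 r : P x0 -> 0 < r -> (forall w, `|w - x0| = r -> P w) ->
  exists2 c, 0 < c & forall w, `|w - x0| = r -> c <= bregD f x0 w.
Proof.
move=> Px0 r0 PS.
pose Sp := [set w | `|w - x0| = r].
have [Sp0|Sp0] := pselect (Sp !=set0); last first.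
  by exists 1 => // w Sw; exfalso; apply: Sp0; exists w.
have cSp : compact Sp.
  apply: bounded_closed_compact.
    rewrite /= /bounded_near; near=> M => w /= Sw.
    apply: le_trans (_ : r + `|x0| <= M).
      by rewrite -Sw; have := ler_normD (w - x0) x0; rewrite subrK.
    by near: M; apply: nbhs_pinfty_ge; rewrite num_real.
  have -> : Sp = (fun w => `|w - x0|) @^-1` [set r] by [].
  have hc : continuous (fun w : 'rV[R]_d => `|w - x0|).
    by move=> w; exact: (cvg_norm (cvgB cvg_id (cvg_cst _))).
  exact: (continuous_closedP _).1 hc _ (@closed_eq _ r).
have cont : {within Sp, continuous (bregD f x0)}.
  by apply: continuous_in_subspaceT => w /[1!inE] Sw; apply: cont_D => //; exact: PS.
have [wm /set_mem Swm min] := compact_EVT_min Sp0 cSp cont.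
exists (bregD f x0 wm).
  apply: (@D_gt0 R d P f cP sc df) => //; first exact: PS.
  apply/eqP => e; move: Swm; rewrite /Sp /= -e subrr normr0 => r0'.
  by move: r0; rewrite -r0' ltxx.
by move=> w Sw; apply: min; apply/mem_set.
Unshelve. all: by end_near.
Qed.
End H.

Section H.
Variables (R : realType) (d : nat).
Implicit Types (u v w x y : 'rV[R]_d).
Variables (P : set 'rV[R]_d) (f : 'rV[R]_d -> R).
Hypotheses (cP : convex_setv P) (sc : strictly_convex_on P f)
  (df : forall x, P x -> differentiable f x).

Lemma mx_norm_le v (e : R) : 0 <= e -> (forall j, `|v 0 j| <= e) -> `|v| <= e.
Proof.
move=> e0 H; change (mx_norm v <= e); rewrite mx_normrE.
apply/bigmax_leP; split => // -[i j] _ /=.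
by rewrite (ord1 i); exact: H.
Qed.

Lemma core (T : Type) (g : T -> 'rV[R]_d) (U : set T) x0 :
  open P -> (forall j x, P x -> differentiable (partial j f) x) ->
  U !=set0 -> (forall t, U t -> P (g t)) -> P x0 ->
  {for x0, continuous (fun x => inf [set bregD f x (g t) | t in U])}.
Proof.
move=> oP dpf U0 gP Px0.
set F := fun x => inf [set bregD f x (g t) | t in U].
have nP : nbhs x0 P by apply: open_nbhs_nbhs; split.
have [e e0 be] := (nbhs_ballP _ _).1 nP.
have r0 : 0 < e / 2 by rewrite divr_gt0.
set r := e / 2 in r0.
have PS : forall w, `|w - x0| = r -> P w.
  move=> w wr; apply: be; rewrite -ball_normE /ball_ /= distrC wr /r ltr_pdivrMr // mulr_natr mulr2n ltrDr; exact: e0.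
have [c c0 cb] := @sphere_bound R d P f cP sc df x0 r Px0 r0 PS.
have gr := @growth R d P f sc df x0 r c Px0 r0 c0 cb.
have Sne x : [set bregD f x (g t) | t in U] !=set0.
  by case: U0 => t Ut; exists (bregD f x (g t)); exists t.
have Slb x : P x -> lbound [set bregD f x (g t) | t in U] 0.
  by move=> Px _ [t Ut <-]; apply: (@D_ge0 R d P f sc df) => //; exact: gP.
have F00 : 0 <= F x0 by apply: lb_le_inf; [exact: Sne | exact: Slb].
set F0 := F x0 in F00 *.
set K0 := grad f x0.
set N : R := d%:R.
have N0 : 0 <= N by [].
pose B := 1 + N * (`|K0| + 1) + 2 * N * `|x0| + N * r.
pose G := N * r / c.
have nK0 := normr_ge0 K0.
have nx0 := normr_ge0 x0.
have B1 : 1 <= B by rewrite /B; nra.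
have G0 : 0 <= G by rewrite /G divr_ge0 // ?mulr_ge0 // ltW.
apply/(@cvgrPdist_lt _ _ _ (nbhs x0) (nbhs_filter x0)) => eps eps0.
pose Q := 4 * (B + G * (F0 + 1) + 1).
have hGF : 0 <= G * (F0 + 1) by apply: mulr_ge0 => //; lra.
have Q1 : 1 <= Q by rewrite /Q; lra.
have Q0 : 0 < Q by lra.
pose eta := Num.min 1 eps / Q.
have m0 : 0 < Num.min 1 eps by rewrite lt_min ltr01 eps0.
have m1 : Num.min 1 eps <= 1 by rewrite ge_min lexx.
have m2 : Num.min 1 eps <= eps by rewrite ge_min lexx orbT.
have eta0 : 0 < eta by rewrite /eta divr_gt0.
have etaQe : eta * Q = Num.min 1 eps by rewrite /eta divfK // gt_eqF.
have etaQ : eta * Q <= eps by rewrite etaQe.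
have etaQ1 : eta * Q <= 1 by rewrite etaQe.
have eta1 : eta <= 1.
  by rewrite /eta ler_pdivrMr // mul1r; apply: le_trans m1 _.
have n1 : \forall x \near x0, `|x - x0| < eta.
  exact: (@cvgrPdistC_lt _ _ _ (nbhs x0) (nbhs_filter x0) id x0).1 cvg_id _ eta0.
have n2 : \forall x \near x0, `|f x - f x0| < eta.
  exact: (@cvgrPdistC_lt _ _ _ (nbhs x0) (nbhs_filter x0) f (f x0)).1
    (differentiable_continuous (df _ Px0)) _ eta0.
have n3 : \forall x \near x0, `|grad f x - grad f x0| <= eta.
  have nj : forall j, \forall x \near x0, `|partial j f x - partial j f x0| < eta.
    move=> j.
    exact: (@cvgrPdistC_lt _ _ _ (nbhs x0) (nbhs_filter x0) (partial j f) _).1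
      (differentiable_continuous (dpf j _ Px0)) _ eta0.
  have := @filter_forall _ 'I_d _ _ (nbhs_filter x0) nj.
  apply: filterS => x hx; apply: mx_norm_le; first exact: ltW.
  by move=> j; rewrite !mxE; exact: ltW (hx j).
have rc0 : 0 <= r / c by rewrite divr_ge0 // ltW.
have rcc : r / c * c = r by rewrite divfK // gt_eqF.
have hS0 : has_lbound [set bregD f x0 (g t) | t in U].
  by exists 0; exact: Slb.
near=> x.
have Px : P x by near: x; exact: (nbhs_ballP _ _).2 (ex_intro2 _ _ e e0 be).
have hx1 : `|x - x0| < eta by near: x.
have hx2 : `|f x - f x0| < eta by near: x.
have hx3 : `|grad f x - grad f x0| <= eta by near: x.
have est : forall y, P y ->
  `|bregD f x y - bregD f x0 y| <= eta * B + eta * G * bregD f x0 y.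
  move=> y Py.
  set k := grad f x in hx3 *.
  have id1 : bregD f x y - bregD f x0 y =
     (f x0 - f x) + (dotv (x - x0) k + dotv x0 (k - K0)) - dotv y (k - K0).
    by rewrite /bregD !dotvBl !dotvBr; ring.
  have hk : `|k| <= `|K0| + eta.
    by have := ler_normD (k - K0) K0; rewrite subrK; lra.
  have nk := normr_ge0 k.
  have nxx := normr_ge0 (x - x0).
  have t1 : `|dotv (x - x0) k| <= N * eta * (`|K0| + 1).
    apply: le_trans (@dotv_le R d _ _) _.
    have : `|x - x0| * `|k| <= eta * (`|K0| + 1) by nra.
    rewrite -mulrA -[in X in _ -> X]mulrA; exact: ler_wpM2l.
  have t2 : `|dotv x0 (k - K0)| <= N * `|x0| * eta.
    apply: le_trans (@dotv_le R d _ _) _.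
    by apply: ler_wpM2l; [exact: mulr_ge0 | exact: hx3].
  have hy : `|y| <= `|y - x0| + `|x0|.
    by have := ler_normD (y - x0) x0; rewrite subrK.
  have t3 : `|dotv y (k - K0)| <= N * (`|y - x0| + `|x0|) * eta.
    apply: le_trans (@dotv_le R d _ _) _.
    by apply: ler_pM; [exact: mulr_ge0 | exact: normr_ge0 | exact: ler_wpM2l | exact: hx3].
  have gy := gr y Py.
  have hyx : `|y - x0| <= r / c * bregD f x0 y + r.
    have cr : c / r * (r / c) = 1 by field; rewrite ?gt_eqF.
    have h := ler_wpM2l rc0 (_ : c / r * `|y - x0| <= bregD f x0 y + c).
    have {h} := h ltac:(lra).
    rewrite mulrA (mulrC (r / c)) cr mul1r mulrDr rcc //.
  have t4 : N * eta * `|y - x0| <= N * eta * (r / c * bregD f x0 y + r).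
    by apply: ler_wpM2l => //; apply: mulr_ge0 => //; exact: ltW.
  rewrite id1.
  have tri : `|f x0 - f x + (dotv (x - x0) k + dotv x0 (k - K0)) - dotv y (k - K0)|
     <= `|f x0 - f x| + (`|dotv (x - x0) k| + `|dotv x0 (k - K0)|) + `|dotv y (k - K0)|.
    apply: le_trans (ler_normB _ _) _; rewrite lerD2r.
    apply: le_trans (ler_normD _ _) _; rewrite lerD2l; exact: ler_normD.
  apply: le_trans tri _.
  rewrite distrC in hx2.
  rewrite /B /G.
  lra.
have hEB : eta * B <= eps / 4 by rewrite /Q in etaQ; nra.
have hEG : eta * G * (F0 + 1) <= eps / 4 by rewrite /Q in etaQ; nra.
have hEG1 : eta * G <= 1 / 4 by rewrite /Q in etaQ1; nra.
have eG0 : 0 <= eta * G by apply: mulr_ge0 => //; exact: ltW.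
have lo : (1 - eta * G) * F0 - eta * B <= F x.
  apply: lb_le_inf; first exact: Sne.
  move=> _ [t Ut <-].
  have Pg := gP t Ut.
  have h := est _ Pg.
  have h0 : F0 <= bregD f x0 (g t) by apply: ge_inf => //; exists t.
  move: h; rewrite ler_norml => /andP[h1 h2].
  have : 0 <= (1 - eta * G) * (bregD f x0 (g t) - F0) by apply: mulr_ge0; lra.
  nra.
have e4 : 0 < eps / 4 by lra.
have hi0 : has_inf [set bregD f x0 (g t) | t in U] by split; [exact: Sne | exact: hS0].
have [_ [t1 Ut1 <-] ht1] := inf_adherent e4 hi0.
have Pg := gP t1 Ut1.
have up : F x <= bregD f x (g t1).
  apply: ge_inf; last by exists t1.
  by exists 0; exact: Slb.
have h := est _ Pg.
move: h; rewrite ler_norml => /andP[h1 h2].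
have : eta * G * bregD f x0 (g t1) <= eta * G * (F0 + eps / 4).
  by apply: ler_wpM2l => //; exact: ltW.
move=> h3.
rewrite ltr_norml; apply/andP; split; nra.
Unshelve. all: by end_near.
Qed.
End H.


Lemma entry_le (R : realType) m n (Mx : 'M[R]_(m, n)) i j : `|Mx i j| <= `|Mx|.
Proof.
change (`|Mx i j| <= mx_norm Mx); rewrite mx_normrE; apply/bigmax_geP; right => /=.
by exists (i, j).
Qed.

Lemma row_cont (R : realType) K d (i : 'I_K) (e : 'M[R]_(K, d)) :
  {for e, continuous (fun z : 'M[R]_(K, d) => row i z)}.
Proof.
apply/(@cvgrPdist_lt _ _ _ (nbhs e) (nbhs_filter e)) => eps eps0.
have := (@cvgrPdist_lt _ _ _ (nbhs e) (nbhs_filter e) id e).1 cvg_id _ eps0.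
apply: filterS => z hz; apply: le_lt_trans hz.
apply: mx_norm_le => // j; rewrite !mxE.
have := @entry_le R K d (e - z) i j; rewrite !mxE; exact.
Qed.

(* etabar : 'M[R]_(K, d) -- row i is the natural parameter eta_i of arm i *)
Theorem lemma6 (R : realType) (K d M : nat)
  (Psi : 'I_K -> set 'rV[R]_d) (A : 'I_K -> 'rV[R]_d -> R)
  (Theta : 'I_M -> set 'M[R]_(K, d)) :
  (1 < M)%N ->
  (forall i, open (Psi i)) ->
  (forall i, convex_setv (Psi i)) ->
  (forall i, strictly_convex_on (Psi i) (A i)) ->
  (forall i, C2_on (Psi i) (A i)) ->
  (forall i, posdef_hessian_on (Psi i) (A i)) ->
  (forall m, Theta m !=set0) ->
  (forall m e i, Theta m e -> Psi i (row i e)) ->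
  (forall m m', m != m' -> Theta m `&` Theta m' = set0) ->
  (forall m, rel_open_aff (Theta m)) ->
  forall (l : 'I_M) (i : 'I_K),
    {within Theta l, continuous (fun e : 'M[R]_(K, d) =>
       inf [set bregD (A i) (row i e) (row i e') | e' in
              \bigcup_(m in [set m | m != l]) Theta m])}.
Proof.
move=> M1 oPsi cPsi sc C2 _ ne inPsi _ _ l i.
apply: continuous_in_subspaceT => e /[1!inE] He.
set U := \bigcup_(m in [set m | m != l]) Theta m.
have U0 : U !=set0.
  have mlt : ((nat_of_ord l == 0%N) < M)%N by case: (nat_of_ord l == 0%N); [exact: M1 | exact: ltnW M1].
  pose m := Ordinal mlt.
  have ml : m != l.
    apply/eqP => /(congr1 val) /=; case: eqP => [->|]; first by [].
    by move=> h h'; apply: h; rewrite -h'.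
  have [e' He'] := ne m.
  by exists e'; exists m.
have gP : forall e', U e' -> Psi i (row i e').
  by move=> e' [m _ Hm]; exact: inPsi Hm.
have [d1 d2 _] := C2 i.
have hcore := @core R d (Psi i) (A i) (cPsi i) (sc i) d1 _ (fun e' => row i e') U
  (row i e) (oPsi i) d2 U0 gP (inPsi _ _ _ He).
exact: (continuous_comp (@row_cont R K d i e) hcore).
Qed.
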